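(* Let $n,k\geq 1$ and let ${\bf m}=(m_1,\dots,m_k)$ be an array of nonnegative integers. For every permutation $\tau\in\mathfrak{S}_k$ there exists a bijection $\mathfrak{a}\mapsto\mathfrak{b}$ from $\mathcal{A}_n^k({\bf m})$ onto $\mathcal{A}_n^k({\bf m}')$, where ${\bf m}'=(m_{\tau(1)},\dots,m_{\tau(k)})$, such that $\mathrm{DEZ}(\mathfrak{a})=\mathrm{DEZ}(\mathfrak{b})$ and $\mathrm{Der}(\mathfrak{a})=\mathrm{Der}(\mathfrak{b})$.
   Context: $\mathfrak{S}_n$ is the set of permutations of $[n]=\{1,\dots,n\}$; $\mathrm{FIX}(\pi)=\{i:\pi(i)=i\}$. For $k\ge1$, a $k$-arrangement of $[n]$ is a pair $\mathfrak{a}=(\pi,\phi)$ with $\pi\in\mathfrak{S}_n$ and $\phi:\mathrm{FIX}(\pi)\to\{-1,\dots,-k\}$ arbitrary; $\mathcal{A}_n^k$ is the set of them. The positive reduction of an integer word replaces every occurrence of its $i$-th smallest positive letter by $i$, for all $i$ (negative letters unchanged). The derangement form $\mathrm{df}_k(\mathfrak{a})$ is obtained from $\pi(1)\cdots\pi(n)$ by replacing $\pi(i)$ with $\phi(i)$ for each $i\in\mathrm{FIX}(\pi)$ and then applying positive reduction. For an integer word $w=w_1\cdots w_n$, $\mathrm{DES}(w)=\{i\in[n-1]:w_i>w_{i+1}\}$, and $\mathrm{Pos}(w)$ is the subword of positive letters. $\mathrm{DEZ}(\mathfrak{a})=\mathrm{DES}(\mathrm{df}_k(\mathfrak{a}))$,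 $\mathrm{Der}(\mathfrak{a})=\mathrm{Pos}(\mathrm{df}_k(\mathfrak{a}))$, $\mathrm{fix}_i(\mathfrak{a})=|\{j\in\mathrm{FIX}(\pi):\phi(j)=-i\}|$, and $\mathcal{A}_n^k({\bf m})=\{\mathfrak{a}\in\mathcal{A}_n^k:\mathrm{fix}_i(\mathfrak{a})=m_i,\ 1\le i\le k\}$. *)

(* Defs.v *)
From mathcomp Require Import all_boot all_order all_fingroup all_algebra.
Set Implicit Arguments. Unset Strict Implicit. Unset Printing Implicit Defensive.
Import Order.TTheory GRing.Theory Num.Theory.

(* Positions and values are 0-based ordinals 'I_n representing [n] = {1..n}
   via i |-> i+1.  Labels -1..-k are represented by c : 'I_k meaning -(c+1). *)

Definition arr_raw (n k : nat) := ('S_n * {ffun 'I_n -> option 'I_k})%type.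

Definition is_arr n k (a : arr_raw n k) : bool :=
  [forall i : 'I_n, (a.1 i == i) == (a.2 i != None)].

Definition fixc n k (a : arr_raw n k) (c : 'I_k) : nat :=
  #|[set j : 'I_n | a.2 j == Some c]|.

Definition Anm n k (m : 'I_k -> nat) : {set arr_raw n k} :=
  [set a | is_arr a && [forall c : 'I_k, fixc a c == m c]].

Definition posred (w : seq int) : seq int :=
  [seq (if (0 < x)%R
        then Posz (size (undup [seq y <- w | (0 < y)%R && (y <= x)%R]))
        else x) | x <- w].

Definition raw_word n k (a : arr_raw n k) : seq int :=
  [seq (if a.1 j == j then
          match a.2 j with Some c => - Posz ((c : nat).+1) | None => 0 end
        else Posz ((a.1 j : nat).+1))%R | j <- enum 'I_n].

Definition df n k (a : arr_raw n k) : seq int := posred (raw_word a).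

(* DES(w) = { i in [size w - 1] : w_i > w_{i+1} }, 1-based *)
Definition DES (w : seq int) : seq nat :=
  [seq i <- iota 1 (size w).-1 | (nth 0 w i < nth 0 w i.-1)%R].

Definition Pos (w : seq int) : seq int := [seq x <- w | (0 < x)%R].

Definition DEZ n k (a : arr_raw n k) : seq nat := DES (df a).
Definition Der n k (a : arr_raw n k) : seq int := Pos (df a).

(* Main.v *)
Require Import Defs.
From mathcomp Require Import all_boot all_order all_fingroup all_algebra.
From mathcomp Require Import zify.
Set Implicit Arguments. Unset Strict Implicit. Unset Printing Implicit Defensive.

Section Fiber.
Variables (T : finType) (K : eqType) (A B : {set T}) (key : T -> K).
Hypothesis hcard : forall x, #|[set a in A | key a == x]| = #|[set b in B | key b == x]|.

Let FA x := enum [set a in A | key a == x].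
Let FB x := enum [set b in B | key b == x].
Definition fmap (a : T) : T := nth a (FB (key a)) (index a (FA (key a))).

Lemma sizeF x : size (FA x) = size (FB x).
Proof. by rewrite /FA /FB -!cardE hcard. Qed.

Lemma fmap_in a : a \in A -> fmap a \in [set b in B | key b == key a].
Proof.
move=> aA; rewrite -mem_enum /fmap; apply: mem_nth.
rewrite -sizeF index_mem mem_enum inE aA eqxx //.
Qed.

Lemma fiber_bij : exists f : T -> T,
  [/\ {in A, forall a, f a \in B}, {in A &, injective f},
      (forall b, b \in B -> exists2 a, a \in A & f a = b) &
      {in A, forall a, key (f a) = key a}].
Proof.
exists fmap; split.
- by move=> a /fmap_in; rewrite inE => /andP[].
- move=> a1 a2 h1 h2 e.
  have k1 := fmap_in h1; have k2 := fmap_in h2.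
  rewrite inE in k1; rewrite inE in k2.
  move: k1 k2 => /andP[_ /eqP k1] /andP[_ /eqP k2].
  have ek : key a1 = key a2 by rewrite -k1 -k2 e.
  move: e; rewrite /fmap ek.
  have u : uniq (FB (key a2)) by apply: enum_uniq.
  have i1 : index a1 (FA (key a2)) < size (FB (key a2)).
    by rewrite -sizeF index_mem mem_enum inE h1 ek eqxx.
  have i2 : index a2 (FA (key a2)) < size (FB (key a2)).
    by rewrite -sizeF index_mem mem_enum inE h2 eqxx.
  rewrite (set_nth_default a2 a1 i1) => /eqP; rewrite nth_uniq // => /eqP e.
  have m1 : a1 \in FA (key a2) by rewrite mem_enum inE h1 ek eqxx.
  have m2 : a2 \in FA (key a2) by rewrite mem_enum inE h2 eqxx.
  by rewrite -(nth_index a1 m1) e nth_index.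
- move=> b bB.
  have mb : b \in FB (key b) by rewrite mem_enum inE bB eqxx.
  have ib : index b (FB (key b)) < size (FA (key b)) by rewrite sizeF index_mem.
  set a := nth b (FA (key b)) (index b (FB (key b))).
  have ma : a \in FA (key b) by apply: mem_nth.
  move: (ma); rewrite mem_enum inE => /andP[aA /eqP ka].
  exists a => //; rewrite /fmap ka index_uniq ?enum_uniq //.
  by rewrite nth_index.
- by move=> a /fmap_in; rewrite inE => /andP[_ /eqP].
Qed.
End Fiber.

Lemma mobius n (g1 g2 : {set 'I_n} -> nat) :
  (forall B : {set 'I_n}, \sum_(A : {set 'I_n} | A \subset B) g1 A = \sum_(A : {set 'I_n} | A \subset B) g2 A) ->
  forall A, g1 A = g2 A.
Proof.
move=> h A; have [N] := ubnP #|A|; elim: N A => // N IH A hA.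
have := h A; rewrite (bigD1 A) //= [in RHS](bigD1 A) //=.
suff -> : \sum_(C : {set 'I_n} | (C \subset A) && (C != A)) g1 C =
          \sum_(C : {set 'I_n} | (C \subset A) && (C != A)) g2 C by move/addIn.
apply: eq_bigr => C /andP[sCA nCA]; apply: IH.
have : C \proper A by rewrite properEneq nCA sCA.
move/proper_card; lia.
Qed.

Fixpoint shp (lk : nat -> bool) (n : nat) : seq nat :=
  match n with
  | 0 => [::]
  | n'.+1 => match shp (fun i => lk i.+1) n' with
             | [::] => [:: 1]
             | a :: r => if lk 0 then a.+1 :: r else 1 :: a :: r
             end
  end.

Lemma shp_prop lk n : sumn (shp lk n) = n /\ all (fun x => 0 < x) (shp lk n).
Proof.
elim: n lk => [|n IH] lk //=.
case: (IH (fun i => lk i.+1)); case: (shp _ n) => [|a r] /=.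
  by move=> <-.
move=> e /andP[a0 ra]; case: (lk 0) => /=; rewrite ?a0 ?ra; split => //; lia.
Qed.

Lemma rel_blocks (T : Type) (x0 : T) (r : rel T) (lk : nat -> bool) (s : seq T) :
  (forall i, i.+1 < size s -> lk i -> r (nth x0 s i) (nth x0 s i.+1)) <->
  all (sorted r) (reshape (shp lk (size s)) s).
Proof.
elim: s lk => [|x s IH] lk; first by split.
rewrite /=.
have [_] := shp_prop (fun i => lk i.+1) (size s).
have := IH (fun i => lk i.+1).
have [_] := shp_prop (fun i => lk i.+1) (size s).
case: s IH => [|y s] IH; first by move=> *; split.
case E: (shp _ (size (y :: s))) => [|a rr]; first by have := (shp_prop (fun i => lk i.+1) (size (y::s))).1; rewrite E.
move=> _ IH1 /= /andP[a0 _].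
case: a a0 E IH1 => // a _ E IH1.
simpl in IH1.
case L0: (lk 0) => /=.
- rewrite -andbA; split.
  + move=> h; apply/andP; split; first by apply: (h 0).
    by apply/IH1 => i hi; apply: (h i.+1).
  + move=> /andP[h1 /IH1 h2] [|i] hi //= hl; exact: h2.
- split.
  + by move=> h; apply/IH1 => i hi; apply: (h i.+1).
  + by move=> /IH1 h [|i] hi //=; [rewrite L0 | exact: h].
Qed.

Section Core.
Variable k : nat.
Notation T := (option 'I_k).

Definition le_opt (x y : T) : bool :=
  match x, y with
  | Some a, Some b => (b <= a)%N
  | None, _ => true
  | Some _, None => false
  end.

Lemma le_opt_total : total le_opt.
Proof. by case=> [a|] [b|] //=; apply: leq_total. Qed.
Lemma le_opt_trans : transitive le_opt.
Proof. by case=> [a|] [b|] [c|] //= h1 h2; lia. Qed.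
Lemma le_opt_anti : antisymmetric le_opt.
Proof.
case=> [a|] [b|] //= /andP[h1 h2]; congr Some; apply: val_inj => /=; lia.
Qed.

Definition blk_op (g : 'I_k -> 'I_k) (s : seq T) := sort le_opt (map (omap g) s).
Definition op n (lk : nat -> bool) g (s : seq T) :=
  flatten (map (blk_op g) (reshape (shp lk n) s)).

Lemma perm_op n lk g s : size s = n -> perm_eq (op n lk g s) (map (omap g) s).
Proof.
move=> hs; rewrite /op.
have {2}-> : s = flatten (reshape (shp lk n) s).
  by rewrite reshapeKr // (shp_prop lk n).1 hs.
elim: (reshape _ _) => [|b bs IH] //=.
by rewrite map_cat; apply: perm_cat => //; rewrite /blk_op perm_sort.
Qed.

Lemma size_op n lk g s : size s = n -> size (op n lk g s) = n.
Proof. by move=> hs; rewrite (perm_size (perm_op lk g hs)) size_map. Qed.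

Lemma reshape_op n lk g s : size s = n ->
  reshape (shp lk n) (op n lk g s) = map (blk_op g) (reshape (shp lk n) s).
Proof.
move=> hs; rewrite /op.
have e : shape (map (blk_op g) (reshape (shp lk n) s)) = shp lk n.
  rewrite /shape -map_comp.
  rewrite (eq_map (g := size)); last by move=> b /=; rewrite /blk_op size_sort size_map.
  by rewrite -/(shape _) reshapeKl // (shp_prop lk n).1 hs.
by rewrite -{1}e flattenK.
Qed.

Lemma sorted_op n lk g s : size s = n ->
  all (sorted le_opt) (reshape (shp lk n) (op n lk g s)).
Proof.
move=> hs; rewrite reshape_op // all_map; apply/allP => b _ /=.
by apply: sort_sorted; apply: le_opt_total.
Qed.

Definition r2 (x y : T) := isSome x && isSome y.

Lemma blk_pat g b : sorted r2 b -> map isSome (blk_op g b) = map isSome b.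
Proof.
case: b => [|x [|y b]] //=.
  move=> _; rewrite /blk_op /=.
  by case: x.
move=> hp.
have hall : all isSome [:: x, y & b].
  elim: b x y hp => [|z b IH] x y /=; first by rewrite /r2 /= !andbT. 
  move=> /andP[/andP[-> _]] hp; exact: IH hp.
have hall' : all isSome (blk_op g [:: x, y & b]).
  rewrite /blk_op (perm_all _ (permEl (perm_sort _ _))) all_map.
  by apply/allP => z hz /=; move/allP: hall => /(_ z hz); case: z {hz}.
have s1 := size_map isSome [:: x, y & b].
have s2 := size_map isSome (blk_op g [:: x, y & b]).
have e1 : all (pred1 true) (map isSome [:: x, y & b]).
  by rewrite all_map; apply: sub_all hall => z; case: z.
have e2 : all (pred1 true) (map isSome (blk_op g [:: x, y & b])).
  by rewrite all_map; apply: sub_all hall' => z; case: z.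
move: e1 e2 => /all_pred1P E1 /all_pred1P E2.
transitivity (map isSome [:: x, y & b]); last by [].
rewrite E1 E2 !size_map /blk_op size_sort size_map //.
Qed.

Lemma pat_op n lk g s : size s = n ->
  all (sorted r2) (reshape (shp lk n) s) ->
  map isSome (op n lk g s) = map isSome s.
Proof.
move=> hs ha; rewrite /op.
have {2}-> : s = flatten (reshape (shp lk n) s).
  by rewrite reshapeKr // (shp_prop lk n).1 hs.
rewrite !map_flatten -map_comp; congr flatten.
apply/eq_in_map => b hb /=; apply: blk_pat.
by move/allP: ha; apply.
Qed.

Lemma op_inj n lk g s1 s2 : injective g -> size s1 = n -> size s2 = n ->
  all (sorted le_opt) (reshape (shp lk n) s1) ->
  all (sorted le_opt) (reshape (shp lk n) s2) ->
  op n lk g s1 = op n lk g s2 -> s1 = s2.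
Proof.
move=> ig h1 h2 a1 a2 e.
have := congr1 (reshape (shp lk n)) e; rewrite !reshape_op // => e2.
rewrite -(reshapeKr (sh := shp lk n) (s := s1)); last by rewrite (shp_prop lk n).1 h1.
rewrite -(reshapeKr (sh := shp lk n) (s := s2)); last by rewrite (shp_prop lk n).1 h2.
congr flatten; move: e2 a1 a2.
have : size (reshape (shp lk n) s1) = size (reshape (shp lk n) s2) by rewrite !size_reshape.
elim: (reshape _ s1) (reshape _ s2) => [|b1 bs1 IH] [|b2 bs2] //= [] hsz [] eb ebs /andP[sb1 sbs1] /andP[sb2 sbs2].
rewrite (IH bs2) //; congr cons.
apply: (sorted_eq le_opt_trans le_opt_anti) => //.
have hinj : injective (omap g) by case=> [x|] [y|] //= [] /ig ->.
apply: (perm_map_inj hinj).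
by rewrite -(perm_sort le_opt) -/(blk_op g b1) eb /blk_op perm_sort.
Qed.

End Core.

Section Count.
Variables n k : nat.
Notation T := (option 'I_k).
Variable P : nat -> bool.

Definition asc (s : seq T) (i : nat) : bool :=
  match nth None s i, nth None s i.+1 with
  | Some c, Some d => (c < d)%N
  | _, _ => false
  end.
Definition AscSet (t : n.-tuple T) : {set 'I_n} := [set i : 'I_n | asc t i].
Definition inB (B : {set 'I_n}) (i : nat) := [exists j : 'I_n, (val j == i) && (j \in B)].
Definition lkf (B : {set 'I_n}) (i : nat) := P i && P i.+1 && ~~ inB B i.
Definition patok (t : n.-tuple T) := map isSome t == mkseq P n.
Definition cont (m : 'I_k -> nat) (t : n.-tuple T) := [forall c, count_mem (Some c) t == m c].

Lemma patok_nth t i : patok t -> i < n -> isSome (nth None t i) = P i.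
Proof.
move=> /eqP h hi.
have := congr1 (fun s => nth false s i) h.
by rewrite (nth_map None) ?size_tuple // nth_mkseq.
Qed.

Lemma pat_blocks (B : {set 'I_n}) t : patok t -> all (sorted (@r2 k)) (reshape (shp (lkf B) n) t).
Proof.
move=> hp; have := rel_blocks None (@r2 k) (lkf B) t; rewrite size_tuple => [[h _]].
apply: h => i hi /andP[/andP[p1 p2] _].
by rewrite /r2 !patok_nth //; lia.
Qed.

Lemma asc_sub_iff (B : {set 'I_n}) t : patok t ->
  (AscSet t \subset B) <-> all (sorted (@le_opt k)) (reshape (shp (lkf B) n) t).
Proof.
move=> hp; have := rel_blocks None (@le_opt k) (lkf B) t; rewrite size_tuple => <-.
split.
- move=> hs i hi /andP[/andP[p1 p2] nb].
  have q1 := patok_nth hp (ltnW hi); rewrite p1 in q1.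
  have q2 := patok_nth hp hi; rewrite p2 in q2.
  case E1: (nth None t i) q1 => [c|] // _; case E2: (nth None t i.+1) q2 => [d|] // _ /=.
  rewrite leqNgt; apply/negP => cd.
  have hin : Ordinal (ltnW hi) \in AscSet t by rewrite inE /asc /= E1 E2.
  move/negP: nb; apply; apply/existsP; exists (Ordinal (ltnW hi)).
  by rewrite eqxx (subsetP hs _ hin).
- move=> h; apply/subsetP => j; rewrite inE /asc.
  case E1: (nth None t j) => [c|] //; case E2: (nth None t j.+1) => [d|] // cd.
  have hj : j.+1 < n.
    rewrite ltnNge; apply/negP => hn.
    by rewrite nth_default ?size_tuple in E2.
  have p1 : P j by rewrite -(patok_nth hp (ltnW hj)) E1.
  have p2 : P j.+1 by rewrite -(patok_nth hp hj) E2.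
  case hB: (j \in B) => //.
  have : lkf B j.
    rewrite /lkf p1 p2 /=; apply/existsP => [[j' /andP[/eqP e hj']]].
    by move/val_inj: e => e; rewrite e hB in hj'.
  move/(h j hj); rewrite E1 E2 /=; lia.
Qed.

Definition hcnt (m : 'I_k -> nat) (B : {set 'I_n}) :=
  #|[set t : n.-tuple T | patok t && cont m t && (AscSet t \subset B)]|.
Definition gcnt (m : 'I_k -> nat) (A : {set 'I_n}) :=
  #|[set t : n.-tuple T | patok t && cont m t && (AscSet t == A)]|.

Lemma hcnt_ext m1 m2 B : m1 =1 m2 -> hcnt m1 B = hcnt m2 B.
Proof.
move=> e; apply: eq_card => t; rewrite !inE /cont.
suff -> : [forall c, count_mem (Some c) t == m1 c] = [forall c, count_mem (Some c) t == m2 c] by [].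
by apply: eq_forallb => c; rewrite e.
Qed.

Lemma hcnt_le m (tau : 'S_k) B : hcnt m B <= hcnt (fun i => m (tau i)) B.
Proof.
set g := fun c : 'I_k => (tau^-1)%g c.
set lk := lkf B.
pose opT (t : n.-tuple T) : n.-tuple T := insubd t (op n lk g t).
have vopT t : val (opT t) = op n lk g t.
  by rewrite val_insubd size_op ?size_tuple ?eqxx.
rewrite /hcnt -(card_in_imset (f := opT)); last first.
  move=> t1 t2; rewrite !inE => /andP[/andP[p1 _] a1] /andP[/andP[p2 _] a2] e.
  apply: val_inj; apply: (@op_inj _ n lk g); rewrite ?size_tuple //.
  - by move=> x y; rewrite /g => /perm_inj.
  - exact: ((asc_sub_iff B p1).1 a1).
  - exact: ((asc_sub_iff B p2).1 a2).
  - by rewrite -!vopT e.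
apply: subset_leq_card; apply/subsetP => u /imsetP[t].
rewrite inE => /andP[/andP[hp hc] ha] ->; rewrite inE.
rewrite -andbA; apply/and3P; split.
- by rewrite /patok vopT pat_op ?size_tuple ?pat_blocks.
- apply/forallP => c; rewrite vopT.
  rewrite ((seq.permP (perm_op lk g (size_tuple t))) (pred1 (Some c))) count_map.
  move/forallP: hc => /(_ (tau c)) /eqP <-; apply/eqP; apply: eq_count => x.
  case: x => [x|] //=; rewrite /g; apply/eqP/eqP => [[<-]|[->]].
    by rewrite permKV.
  by rewrite permK.
- apply/(asc_sub_iff B (t := opT t)).
    by rewrite /patok vopT pat_op ?size_tuple ?pat_blocks.
  by rewrite vopT; apply: sorted_op; rewrite size_tuple.
Qed.

Lemma hcnt_eq m (tau : 'S_k) B : hcnt m B = hcnt (fun i => m (tau i)) B.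
Proof.
apply/eqP; rewrite eqn_leq hcnt_le /=.
have e : (fun i => m (tau ((tau^-1)%g i))) =1 m by move=> i; rewrite permKV.
by have := hcnt_le (fun i => m (tau i)) (tau^-1)%g B; rewrite (hcnt_ext B e).
Qed.

Lemma hcnt_sum m B : hcnt m B = \sum_(A : {set 'I_n} | A \subset B) gcnt m A.
Proof.
rewrite /hcnt -sum1_card.
rewrite (partition_big (@AscSet) (fun A : {set 'I_n} => A \subset B)); last first.
  by move=> t; rewrite inE => /andP[_].
apply: eq_bigr => A hA; rewrite /gcnt -sum1_card.
apply: eq_bigl => t; rewrite !inE.
case: (AscSet t =P A) => [->|]; rewrite ?hA ?andbT ?andbF //.
Qed.

Lemma gcnt_eq m (tau : 'S_k) A : gcnt m A = gcnt (fun i => m (tau i)) A.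
Proof.
by apply: mobius => B; rewrite -!hcnt_sum (hcnt_eq m tau).
Qed.

End Count.

Section Transfer.
Variables n k : nat.

Definition Tup (a : arr_raw n k) : n.-tuple (option 'I_k) := [tuple a.2 i | i < n].
Definition Ppi (pi : 'S_n) : nat -> bool :=
  fun i => [exists j : 'I_n, (val j == i) && (pi j == j)].
Definition key (a : arr_raw n k) := (a.1, AscSet (Tup a)).

Lemma Ppi_val pi (j : 'I_n) : Ppi pi j = (pi j == j).
Proof.
apply/existsP/idP => [[j' /andP[/eqP /val_inj -> //]]|h].
by exists j; rewrite eqxx h.
Qed.

Lemma card_count (X : eqType) (f : 'I_n -> X) x :
  #|[set j | f j == x]| = count_mem x [tuple f i | i < n].
Proof.
rewrite cardsE cardE size_filter /= count_map -enumT.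
by apply: eq_count => j; rewrite !inE.
Qed.

Lemma is_arr_pat (a : arr_raw n k) : is_arr a -> patok (Ppi a.1) (Tup a).
Proof.
move=> /forallP h; apply/eqP/(@eq_from_nth _ false); first by rewrite size_map size_tuple size_mkseq.
move=> i; rewrite size_map size_tuple => hi.
rewrite (nth_map None) ?size_tuple // nth_mkseq //.
have -> : i = val (Ordinal hi) by [].
rewrite nth_mktuple Ppi_val; move: (h (Ordinal hi)) => /eqP ->.
by case: (a.2 _).
Qed.

Lemma fib_card (m : 'I_k -> nat) pi A :
  #|[set a in Anm n m | key a == (pi, A)]| = gcnt (Ppi pi) m A.
Proof.
set S := [set a in Anm n m | key a == (pi, A)].
rewrite -(card_in_imset (f := Tup) (D := S)); last first.
  move=> a1 a2; rewrite !inE => /andP[_ /eqP [e1 _]] /andP[_ /eqP [e2 _]] e.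
  case: a1 a2 e1 e2 e => p1 f1 [p2 f2] /= -> -> e; congr pair.
  by apply/ffunP => i; have := congr1 (fun t => tnth t i) e; rewrite !tnth_mktuple.
rewrite /gcnt; apply: eq_card => t; rewrite [in RHS]inE.
apply/imsetP/idP.
- move=> [a]; rewrite !inE => /andP[/andP[ha /forallP hf] /eqP [e1 e2]] ->.
  rewrite -e1 is_arr_pat //= e2 eqxx andbT.
  by apply/forallP => c; rewrite -card_count; apply: hf.
- move=> /andP[/andP[hp hc] /eqP hA].
  pose a : arr_raw n k := (pi, [ffun i => tnth t i]).
  have ta : Tup a = t.
    by apply: eq_from_tnth => i; rewrite tnth_mktuple ffunE.
  exists a => //; rewrite !inE /key ta hA eqxx andbT.
  apply/andP; split.
  + apply/forallP => i /=; rewrite ffunE -Ppi_val.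
    rewrite -(patok_nth hp (ltn_ord i)) (tnth_nth None).
    by case: (nth None t i).
  + apply/forallP => c; rewrite /fixc card_count.
    rewrite (_ : [tuple a.2 i | i < n] = Tup a) // ta.
    by move/forallP: hc => /(_ c).
Qed.

End Transfer.


Import Order.TTheory GRing.Theory Num.Theory.

Section DZ.
Variables n k : nat.
Implicit Types a b : arr_raw n k.

Definition lbl a (j : 'I_n) : nat := if a.2 j is Some c then c else 0.
Definition Qv a (j : 'I_n) : nat :=
  size (undup [seq y <- raw_word a | (0 < y)%R && (y <= Posz (a.1 j).+1)%R]).
Definition va a (j : 'I_n) : int :=
  if a.1 j == j then (- Posz (lbl a j).+1)%R else Posz (Qv a j).

Lemma filter_map_eq (X : Type) (s : seq X) (F G : X -> int) (p : pred int) :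
  (forall x, F x = G x \/ (~~ p (F x) /\ ~~ p (G x))) ->
  filter p (map F s) = filter p (map G s).
Proof.
move=> h; elim: s => //= x s IH; case: (h x) => [->|[/negbTE -> /negbTE ->]].
  by rewrite IH.
by [].
Qed.

Lemma df_map a : is_arr a -> df a = map (va a) (enum 'I_n).
Proof.
move=> /forallP ha; rewrite /df /posred {1}/raw_word -map_comp.
apply: eq_map => j /=; rewrite /va /Qv; case hj: (a.1 j == j).
  have := ha j; rewrite hj /lbl; case: (a.2 j) => // c _; rewrite /=; try by [].
by have -> : (0 < Posz (a.1 j).+1)%R = true by [].
Qed.

Lemma Qv_eq a b j : a.1 = b.1 -> Qv a j = Qv b j.
Proof.
move=> e; rewrite /Qv e; congr (size (undup _)).
rewrite /raw_word; apply: filter_map_eq => i; rewrite e.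
case: ifP => hi; last by left.
right; split; apply/negP => /andP[h _]; move: h.
  by case: (a.2 i) => [c|] //; rewrite oppr_gt0.
by case: (b.2 i) => [c|] //; rewrite oppr_gt0.
Qed.

Lemma nth_enum_map (F : 'I_n -> int) i (hi : i < n) :
  nth 0%R (map F (enum 'I_n)) i = F (Ordinal hi).
Proof.
rewrite (nth_map (Ordinal hi)) ?size_enum_ord //; congr F.
by apply: val_inj; rewrite /= nth_enum_ord.
Qed.

Lemma key_DZ a b : is_arr a -> is_arr b -> a.1 = b.1 ->
  AscSet (Tup a) = AscSet (Tup b) -> DEZ a = DEZ b /\ Der a = Der b.
Proof.
move=> ha hb e hA.
have vab j : a.1 j != j -> va a j = va b j.
  by move=> /negbTE h; rewrite /va h -e h (Qv_eq j e).
have fa j : a.1 j == j -> exists c, a.2 j = Some c.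
  by move/forallP: ha => /(_ j) /eqP -> ; case: (a.2 j) => // c; exists c.
have fb j : a.1 j == j -> exists c, b.2 j = Some c.
  by rewrite e; move/forallP: hb => /(_ j) /eqP -> ; case: (b.2 j) => // c; exists c.
split.
- rewrite /DEZ /DES !df_map // !size_map; apply: eq_in_filter => i.
  rewrite mem_iota -enumT size_enum_ord => /andP[i1 i2].
  have hi : i < n by lia.
  have hi' : i.-1 < n by lia.
  rewrite !(nth_enum_map _ hi) !(nth_enum_map _ hi').
  set j := Ordinal hi; set j' := Ordinal hi'.
  have ej : i = (val j').+1 by rewrite /=; lia.
  case fj: (a.1 j == j); case fj': (a.1 j' == j').
  + have := congr1 (fun S : {set 'I_n} => j' \in S) hA; rewrite !inE /asc -ej.
    have -> : i = val j by [].
    rewrite !nth_mktuple /va fj fj' -e fj fj' /lbl.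
    case: (fa j fj) => c ->; case: (fa j' fj') => c' ->.
    case: (fb j fj) => d ->; case: (fb j' fj') => d' -> /= hc.
    by rewrite !ltrN2 !ltz_nat !ltnS.
  + by rewrite /va fj fj' -e fj fj'; lia.
  + by rewrite /va fj fj' -e fj fj'; lia.
  + by rewrite !vab ?fj ?fj'.
- rewrite /Der /Pos !df_map //; apply: filter_map_eq => j.
  case fj: (a.1 j == j); last by left; rewrite vab ?fj.
  by right; rewrite /va fj -e fj; split; lia.
Qed.

End DZ.

Import Order.TTheory GRing.Theory Num.Theory.

Theorem lemma2p2 (n k : nat) (hn : (1 <= n)%N) (hk : (1 <= k)%N)
    (m : 'I_k -> nat) (tau : 'S_k) :
  exists f : arr_raw n k -> arr_raw n k,
    [/\ {in Anm n m, forall a, f a \in Anm n (fun i => m (tau i))},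
        {in Anm n m &, injective f},
        (forall b, b \in Anm n (fun i => m (tau i)) ->
           exists2 a, a \in Anm n m & f a = b) &
        {in Anm n m, forall a, DEZ (f a) = DEZ a /\ Der (f a) = Der a}].
Proof.
have hcard : forall x, #|[set a in Anm n m | key a == x]| =
                       #|[set b in Anm n (fun i => m (tau i)) | key b == x]|.
  by case=> pi A; rewrite !fib_card; apply: gcnt_eq.
have [f [h1 h2 h3 h4]] := fiber_bij hcard.
exists f; split => // a ha.
have hfa := h1 a ha; have := h4 a ha; rewrite /key => [[e1 e2]].
move: ha hfa; rewrite !inE => /andP[ha _] /andP[hfa _].
by apply: key_DZ.
Qed.
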